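(* Let $r>0$ and let $z\colon[0,r)\to[0,r)$ be a homeomorphism with $(\alpha)z>\alpha$ for all $\alpha\in(0,r)$. Let $f$ be a permutation of $[0,r)$ such that $f$ commutes with $z$, $f$ is (right-)continuous at $0$, and $f$ has finitely many points of discontinuity. Then $f$ is continuous (for the usual topology).
   Context: Maps act on the right: $(\alpha)z$ is the image of $\alpha$ under $z$, and $fz$ means ''first $f$, then $z$''. *)

(* Defs.v *)
From Stdlib Require Import Reals List.
Open Scope R_scope.

Definition Ico0 (r : R) (x : R) : Prop := 0 <= x /\ x < r.

Definition cont_at_in (D : R -> Prop) (f : R -> R) (x : R) : Prop :=
  forall eps : R, 0 < eps -> exists delta : R, 0 < delta /\
    forall y : R, D y -> Rabs (y - x) < delta -> Rabs (f y - f x) < eps.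

Definition cont_on (D : R -> Prop) (f : R -> R) : Prop :=
  forall x : R, D x -> cont_at_in D f x.

Definition maps_into (D : R -> Prop) (f : R -> R) : Prop :=
  forall x : R, D x -> D (f x).

Definition perm_on (D : R -> Prop) (f : R -> R) : Prop :=
  maps_into D f /\
  (forall x y : R, D x -> D y -> f x = f y -> x = y) /\
  (forall y : R, D y -> exists x : R, D x /\ f x = y).

Definition homeo_on (D : R -> Prop) (f : R -> R) : Prop :=
  exists g : R -> R,
    maps_into D f /\ maps_into D g /\
    (forall x : R, D x -> g (f x) = x) /\
    (forall y : R, D y -> f (g y) = y) /\
    cont_on D f /\ cont_on D g.

Definition finitely_many_discont (D : R -> Prop) (f : R -> R) : Prop :=
  exists l : list R, forall x : R, D x -> ~ cont_at_in D f x -> In x l.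

(* Main.v *)
Require Import Defs.
From Stdlib Require Import Reals List Lra Lia Classical FinFun.
Open Scope R_scope.

Lemma comp_cont (D : R -> Prop) (h k : R -> R) (x : R) :
  D x -> maps_into D h -> cont_at_in D h x -> cont_at_in D k (h x) ->
  cont_at_in D (fun a => k (h a)) x.
Proof.
  intros Dx Mh Ch Ck eps He.
  destruct (Ck eps He) as [d1 [Hd1 H1]].
  destruct (Ch d1 Hd1) as [d2 [Hd2 H2]].
  exists d2; split; [exact Hd2|].
  intros y Dy Hy. apply H1; [apply Mh; auto| apply H2; auto].
Qed.

Lemma cont_ext (D : R -> Prop) (h k : R -> R) (x : R) :
  D x -> (forall a, D a -> h a = k a) -> cont_at_in D h x -> cont_at_in D k x.
Proof.
  intros Dx E C eps He. destruct (C eps He) as [d [Hd H]].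
  exists d; split; [exact Hd|]. intros y Dy Hy. rewrite <- !E; auto.
Qed.

Fixpoint its (z : R -> R) (n : nat) (x : R) : R :=
  match n with O => x | S n => z (its z n x) end.

Theorem lemma3p1 (r : R) (z f : R -> R)
  (hr : 0 < r)
  (hz : homeo_on (Ico0 r) z)
  (hzgt : forall a : R, 0 < a < r -> z a > a)
  (hf : perm_on (Ico0 r) f)
  (hcomm : forall a : R, Ico0 r a -> f (z a) = z (f a))
  (hf0 : cont_at_in (Ico0 r) f 0)
  (hfin : finitely_many_discont (Ico0 r) f) :
  cont_on (Ico0 r) f.
Proof.
  destruct hz as [g [Mz [Mg [gz [zg [Cz Cg]]]]]].
  destruct hf as [Mf _].
  destruct hfin as [l Hl].
  assert (key : forall x, Ico0 r x -> cont_at_in (Ico0 r) f (z x) -> cont_at_in (Ico0 r) f x).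
  { intros x Dx C.
    apply cont_ext with (h := fun a => g (f (z a))); auto.
    - intros a Da. rewrite hcomm; auto.
    - apply comp_cont with (h := fun a => f (z a)).
      + exact Dx.
      + intros a Da. apply Mf, Mz; auto.
      + apply comp_cont; auto.
      + apply Cg. apply Mf, Mz; auto. }
  intros x Dx. destruct (classic (cont_at_in (Ico0 r) f x)) as [C|NC]; auto.
  exfalso.
  destruct Dx as [x0 xr].
  destruct (Req_dec x 0) as [->|xn0]; [contradiction|].
  assert (xp : 0 < x) by lra.
  assert (pos : forall n, 0 < its z n x < r).
  { induction n; simpl; [lra|].
    destruct (Mz (its z n x)) as [_ Hr]. unfold Ico0; lra.
    specialize (hzgt _ IHn). lra. }
  assert (step : forall n, its z n x < its z (S n) x).
  { intros n; simpl. apply hzgt, pos. }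
  assert (mono : forall m k, its z m x < its z (S (k + m)) x).
  { intros m k; induction k; simpl.
    - apply step.
    - specialize (step (S (k + m))). simpl in *. lra. }
  assert (ND : forall n, ~ cont_at_in (Ico0 r) f (its z n x)).
  { induction n; simpl; auto. intro C'. apply IHn, key; auto.
    specialize (pos n); unfold Ico0; lra. }
  set (L := map (fun n => its z n x) (seq 0 (S (length l)))).
  assert (HND : NoDup L).
  { unfold L. apply FinFun.Injective_map_NoDup; [|apply seq_NoDup].
    intros m n E. destruct (Nat.lt_total m n) as [H|[H|H]]; auto.
    - replace n with (S ((n - S m) + m))%nat in E by lia.
      specialize (mono m (n - S m)%nat). lra.
    - replace m with (S ((m - S n) + n))%nat in E by lia.
      specialize (mono n (m - S n)%nat). lra. }
  assert (Hincl : incl L l).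
  { intros y Hy. unfold L in Hy. apply in_map_iff in Hy.
    destruct Hy as [n [<- _]]. apply Hl; auto.
    specialize (pos n); unfold Ico0; lra. }
  pose proof (NoDup_incl_length HND Hincl) as HL.
  unfold L in HL. rewrite length_map, length_seq in HL. lia.
Qed.
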